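(* Let $A=(\Sigma,q,N,\delta)$ be a well-formed LQCA, and let $A'=(\Sigma,q,N,\delta')$ where $\delta'(w)=\delta(w)/\|\delta(w)\|$ for all $w\in\Sigma^{|N|}$. Then $U_{A'}=U_A$, and $\|\delta'(w)\|=1$ for all $w$.
   Context: A linear quantum cellular automaton (LQCA) is a tuple $A=(\Sigma,q,N,\delta)$ where $\Sigma$ is a finite nonempty set of states, $N=(a_1,\dots,a_r)$ is a strictly increasing sequence of integers, $\delta:\Sigma^r\to\mathbb C^\Sigma$ satisfies $\|\delta(w)\|>0$ for all $w$ (with the standard norm on $\mathbb C^\Sigma$), and $q\in\Sigma$ satisfies $[\delta(q,\dots,q)](x)=1$ if $x=q$ and $0$ otherwise. A configuration is a map $c:\mathbb Z\to\Sigma$ with $c_i\ne q$ for only finitely many $i$; $\mathcal C_A$ is the set of configurations. With $c_{i+N}=(c_{i+a_1},\dots,c_{i+a_r})$, the time evolution operator is $U_A(d,c)=\prod_{i\in\mathbb Z}[\delta(c_{i+N})](d_i)$ for $c,d\in\mathcal C_A$, viewed as a linear operator on $\ell_2(\mathcal C_A)$. $A$ is well-formed if $U_A$ preserves the $\ell_2$ norm. *)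

(* Defs.v *)
From HB Require Import structures.
From mathcomp Require Import all_boot all_order all_algebra.
From mathcomp Require Import all_classical all_reals.
From mathcomp Require Import ereal esum.
From mathcomp Require Import complex.

Set Implicit Arguments.
Unset Strict Implicit.
Unset Printing Implicit Defensive.
Import Order.TTheory GRing.Theory Num.Theory ComplexField.

Local Open Scope classical_set_scope.
Local Open Scope ring_scope.

Section LQCA.
Variable R : realType.
Local Notation C := (R[i]).

Definition vnorm (Sigma : finType) (v : Sigma -> C) : R :=
  Num.sqrt (\sum_(x : Sigma) (ComplexField.Normc.normc (v x)) ^+ 2).

Definition is_LQCA (Sigma : finType) (q : Sigma) (r : nat) (N : r.-tuple int)
    (delta : r.-tuple Sigma -> Sigma -> C) : Prop :=
  [/\ sorted (fun a b : int => a < b) N,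
      (forall w, 0 < vnorm (delta w)) &
      (forall x, delta [tuple of nseq r q] x = if x == q then 1 else 0)].

Definition is_config (Sigma : finType) (q : Sigma) (c : int -> Sigma) : Prop :=
  finite_set [set i | c i != q].

Definition configs (Sigma : finType) (q : Sigma) : set (int -> Sigma) :=
  [set c | is_config q c].

Definition nbhd (Sigma : finType) (r : nat) (N : r.-tuple int)
    (c : int -> Sigma) (i : int) : r.-tuple Sigma :=
  map_tuple (fun a => c (i + a)) N.

(* U_A(d, c) = prod_{i in Z} delta(c_{i+N})(d_i); for configurations c, d all but
   finitely many factors equal 1, and the product is the (finitely supported)
   product over all i in Z. *)
Definition U_A (Sigma : finType) (r : nat) (N : r.-tuple int)
    (delta : r.-tuple Sigma -> Sigma -> C) (d c : int -> Sigma) : C :=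
  \big[*%R/1]_(i \in [set: int]) delta (nbhd N c i) (d i).

Definition fin_vector (Sigma : finType) (q : Sigma) (psi : (int -> Sigma) -> C)
  : Prop :=
  finite_set [set c | psi c != 0] /\ [set c | psi c != 0] `<=` configs q.

Definition U_apply (Sigma : finType) (q : Sigma) (r : nat) (N : r.-tuple int)
    (delta : r.-tuple Sigma -> Sigma -> C) (psi : (int -> Sigma) -> C)
    (d : int -> Sigma) : C :=
  \sum_(c \in configs q) U_A N delta d c * psi c.

Definition l2sqnorm (Sigma : finType) (q : Sigma) (psi : (int -> Sigma) -> C)
  : \bar R :=
  \esum_(c in configs q) ((ComplexField.Normc.normc (psi c)) ^+ 2)%:E.

(* well-formed: U_A preserves the l2 norm (tested on the dense subspace of
   finitely supported vectors, on which U_A is first defined) *)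
Definition well_formed (Sigma : finType) (q : Sigma) (r : nat) (N : r.-tuple int)
    (delta : r.-tuple Sigma -> Sigma -> C) : Prop :=
  forall psi, fin_vector q psi ->
    l2sqnorm q (U_apply q N delta psi) = l2sqnorm q psi.

Definition normalize_delta (Sigma : finType) (r : nat)
    (delta : r.-tuple Sigma -> Sigma -> C) : r.-tuple Sigma -> Sigma -> C :=
  fun w x => delta w x / (vnorm (delta w))%:C%C.

End LQCA.

(* Main.v *)
Require Import Defs.
From HB Require Import structures.
From mathcomp Require Import all_boot all_order all_algebra.
From mathcomp Require Import all_classical all_reals.
From mathcomp Require Import ereal esum.
From mathcomp Require Import complex.
From mathcomp Require Import finmap.
Import Order.TTheory GRing.Theory Num.Theory ComplexField.
Set Implicit Arguments.
Unset Strict Implicit.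
Local Open Scope classical_set_scope.
Local Open Scope ring_scope.

Section P.
Variables (R : realType) (Sigma : finType) (q : Sigma) (r : nat)
    (N : r.-tuple int) (delta : r.-tuple Sigma -> Sigma -> R[i]).
Hypothesis HL : is_LQCA q N delta.

Local Notation z0 := [tuple of nseq r q].
Local Notation nc := (@Normc.normc R).

Lemma nc_real (x : R) : 0 <= x -> nc x%:C%C = x.
Proof. by move=> x0; rewrite /Normc.normc /= expr0n /= addr0 sqrtr_sqr ger0_norm. Qed.

Lemma delta_z0 x : delta z0 x = if x == q then 1 else 0.
Proof. by case: HL => _ _ ->. Qed.

Lemma vnorm_z0 : vnorm (delta z0) = 1.
Proof.
rewrite /vnorm (bigD1 q) //= delta_z0 eqxx big1 ?addr0 ?Normc.normc1 ?expr1n ?sqrtr1 //.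
by move=> x /negbTE xq; rewrite delta_z0 xq Normc.normc0 expr0n.
Qed.

Lemma vnorm_gt0 w : 0 < vnorm (delta w).
Proof. by case: HL. Qed.

Definition S (c : int -> Sigma) := [set i | nbhd N c i != z0].

Lemma nbhd_z0 c i : (forall a, a \in (N : seq int) -> c (i + a) = q) -> nbhd N c i = z0.
Proof.
move=> H; apply: val_inj => /=.
rewrite /nbhd /=.
have -> : [seq c (i + a) | a <- N] = [seq q | a <- N] by apply/eq_in_map.
have h (l : seq int) : [seq q | _ <- l] = nseq (size l) q by elim: l => //= a l ->.
by rewrite h size_tuple.
Qed.

Lemma S_finite c : is_config q c -> finite_set (S c).
Proof.
move=> hc.
apply: (sub_finite_set (B := \bigcup_(a in [set` (N : seq int)]) ((fun j => j - a) @` [set i | c i != q]))).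
  move=> i /= Si.
  case: (pselect (exists2 a, a \in (N : seq int) & c (i + a) != q)) => [[a aN ca]|nE].
    by exists a => //; exists (i + a) => //; rewrite addrK.
  case/negP: Si; apply/eqP; apply: nbhd_z0 => a aN; apply/eqP.
  by case: (boolP (c (i + a) == q)) => // ne; exfalso; apply: nE; exists a.
apply: bigcup_finite => // a _; exact: finite_image.
Qed.

Lemma U_prodE (D : r.-tuple Sigma -> Sigma -> R[i])
  (Dz0 : forall x, D z0 x = if x == q then 1 else 0) (B : {fset int}) c d :
  (forall i, i \notin B -> nbhd N c i = z0 /\ d i = q) ->
  U_A N D d c = \prod_(i <- B) D (nbhd N c i) (d i).
Proof. by move=> H; rewrite /U_A (fsbigTE B) // => i /H [-> ->]; rewrite Dz0 eqxx. Qed.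

Definition Bcd c d := fset_set (S c `|` [set i | d i != q]).

Lemma notinB c d i : is_config q c -> is_config q d -> i \notin Bcd c d ->
  nbhd N c i = z0 /\ d i = q.
Proof.
move=> hc hd H.
have nS : ~ (S c `|` [set i | d i != q]) i.
  have fin : finite_set (S c `|` [set i | d i != q]).
    by rewrite finite_setU; split; [exact: S_finite|exact: hd].
  move=> h; move/negP: H; apply; rewrite in_fset_set //.
  exact: mem_set.
split.
  by case: (boolP (nbhd N c i == z0)) => [/eqP//|hh]; exfalso; apply: nS; left.
by case: (boolP (d i == q)) => [/eqP//|hh]; exfalso; apply: nS; right.
Qed.

Definition ext (A : {fset int}) (f : {ffun A -> Sigma}) : int -> Sigma :=
  fun j => match insub j with Some k => f k | None => q end.
Arguments ext {A}.

Lemma ext_val (A : {fset int}) (f : {ffun A -> Sigma}) (k : A) : ext f (val k) = f k.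
Proof. by rewrite /ext valK. Qed.

Lemma ext_out (A : {fset int}) (f : {ffun A -> Sigma}) j : j \notin A -> ext f j = q.
Proof. by move=> jA; rewrite /ext insubN. Qed.

Lemma ext_inj (A : {fset int}) : injective (@ext A).
Proof. by move=> f g e; apply/ffunP => k; rewrite -!ext_val e. Qed.


Lemma U_zero c d j : is_config q c -> is_config q d -> ~ S c j -> d j != q ->
  U_A N delta d c = 0.
Proof.
move=> hc hd nS dj.
rewrite (@U_prodE delta delta_z0 (Bcd c d)); last by move=> i; apply: notinB.
have fin : finite_set (S c `|` [set i | d i != q]).
  by rewrite finite_setU; split; [exact: S_finite|exact: hd].
have jB : j \in Bcd c d by rewrite in_fset_set //; apply: mem_set; right.
have nj : nbhd N c j = z0.
  by case: (boolP (nbhd N c j == z0)) => [/eqP//|hh]; exfalso; apply: nS.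
rewrite (bigD1_seq j) //= ?fset_uniq // nj delta_z0 (negbTE dj) mul0r //.
Qed.

Lemma esum_supp (T : choiceType) (I F : set T) (a : T -> \bar R) :
  F `<=` I -> (forall i, I i -> ~ F i -> a i = 0%E) -> esum I a = esum F a.
Proof.
move=> FI H; rewrite esum_mkcond [RHS]esum_mkcond; apply: eq_esum => i _.
case: (boolP (i \in F)) => iF.
  by rewrite ifT //; apply/mem_set/FI/set_mem.
case: (boolP (i \in I)) => // iI; apply: H; first exact: set_mem.
by move=> Fi; move/negP: iF; apply; exact: mem_set.
Qed.


Hypothesis HW : well_formed q N delta.

Lemma Pc1 c : is_config q c ->
  \big[*%R/1]_(i \in [set: int]) vnorm (delta (nbhd N c i)) = 1.
Proof.
move=> hc.
have finS := @S_finite c hc.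
pose A := fset_set (S c).
have notA i : i \notin A -> nbhd N c i = z0.
  move=> iA; case: (boolP (nbhd N c i == z0)) => [/eqP//|hh]; exfalso.
  by move/negP: iA; apply; rewrite in_fset_set //; apply: mem_set.
have inA i : S c i -> i \in A by move=> h; rewrite in_fset_set //; apply: mem_set.
rewrite (fsbigTE A); last by move=> i /notA ->; exact: vnorm_z0.
set P := \prod_(i <- A) _.
have P0 : 0 <= P by apply: prodr_ge0 => i _; apply: sqrtr_ge0.
suff : P ^+ 2 = 1.
  move/eqP; rewrite sqrf_eq1 => /orP[/eqP//|/eqP Pm].
  by move: P0; rewrite Pm ler0N1.
pose psi := fun c' : int -> Sigma => if c' == c then (1 : R[i]) else 0.
have fv : fin_vector q psi.
  split.
    apply: (sub_finite_set (B := [set c])); last exact: finite_set1.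
    by move=> c' /=; rewrite /psi; case: (c' =P c) => [->//|_]; rewrite eqxx.
  by move=> c' /=; rewrite /psi; case: (c' =P c) => [->//|_]; rewrite eqxx.
have := HW fv; rewrite /l2sqnorm.
rewrite [in RHS](esum_supp (F := [set c])); last 2 first.
- by move=> _ ->.
- by move=> c' _ nc; rewrite /psi; case: (c' =P c) => // _; rewrite Normc.normc0 expr0n.
rewrite esum_set1; last by rewrite lee_fin sqr_ge0.
rewrite /psi eqxx Normc.normc1 expr1n.
have UE d : U_apply q N delta psi d = U_A N delta d c.
  rewrite /U_apply -(fsbig_widen [set c] (configs q)) ?fsbig_set1 /psi ?eqxx ?mulr1 //.
    by move=> _ ->.
  by move=> c' [_ nc]; rewrite /= ifN ?mulr0 //; apply/eqP.
under eq_esum do rewrite UE.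
pose D := [set ext f | f in [set: {ffun A -> Sigma}]].
have extc (f : {ffun A -> Sigma}) : is_config q (ext f).
  apply: (sub_finite_set (B := [set` A])); last exact: finite_fset.
  move=> j /=; case: (boolP (j \in A)) => // /ext_out ->; by rewrite eqxx.
rewrite (esum_supp (F := D)); last 2 first.
- by move=> _ [f _ <-]; exact: extc.
- move=> d hd nD; case: (pselect (exists j, ~ S c j /\ d j != q)) => [[j [nS dj]]|nE].
    by rewrite (U_zero hc hd nS dj) Normc.normc0 expr0n.
  exfalso; apply: nD; exists [ffun k => d (val k)] => //.
  apply/funext => j; rewrite /ext; case: insubP => [k _ <-|jA]; first by rewrite ffunE.
  case: (d j =P q) => [h|/eqP dj]; first exact/esym; exfalso; apply: nE; exists j; split; last exact: dj.
  by move=> /inA; rewrite (negbTE jA).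
have finD : finite_set D by apply: finite_image; exact: finite_finset.
rewrite esum_fset //; last by move=> i _; rewrite lee_fin sqr_ge0.
rewrite fsumEFin // fsbig_image; last by move=> f g _ _ /ext_inj.
have E (g : {ffun A -> Sigma} -> R) :
    \big[+%R/0]_(f \in [set: {ffun A -> Sigma}]) g f = \sum_(f : {ffun A -> Sigma}) g f.
  have h := @bigfs R 0 +%R _ (index_enum _) predT g (index_enum_uniq _)
    (fun i _ H => False_ind _ (negP H (mem_index_enum i))).
  by rewrite h; apply: eq_fsbigl; apply/seteqP; split.
rewrite E.
have UF f : Normc.normc (U_A N delta (ext f) c) ^+ 2 =
    \prod_(k : A) Normc.normc (delta (nbhd N c (val k)) (f k)) ^+ 2.
  rewrite (@U_prodE delta delta_z0 A); last first.
    by move=> i iA; split; [exact: notA | exact: ext_out].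
  rewrite big_seq_fsetE /=.
  rewrite (big_morph _ (@Normc.normcM R) (@Normc.normc1 R)) -prodrXl.
  by apply: eq_bigr => k _; rewrite ext_val.
under eq_bigr do rewrite UF.
rewrite -(bigA_distr_bigA (fun (k : A) (x : Sigma) => Normc.normc (delta (nbhd N c (val k)) x) ^+ 2)) /=.
have V (k : A) : \sum_x Normc.normc (delta (nbhd N c (val k)) x) ^+ 2 =
    vnorm (delta (nbhd N c (val k))) ^+ 2.
  by rewrite /vnorm sqr_sqrtr // sumr_ge0 // => x _; exact: sqr_ge0.
under eq_bigr do rewrite V.
rewrite prodrXl => -[] <-.
by rewrite /P big_seq_fsetE.
Qed.


Lemma vnorm_norm w : vnorm (normalize_delta delta w) = 1.
Proof.
have n0 := vnorm_gt0 w.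
have hs : \sum_x Normc.normc (delta w x) ^+ 2 = vnorm (delta w) ^+ 2.
  by rewrite /vnorm sqr_sqrtr // sumr_ge0 // => x _; exact: sqr_ge0.
rewrite {1}/vnorm /normalize_delta.
under eq_bigr do rewrite Normc.normcM Normc.normcV nc_real ?(ltW n0) // exprMn.
by rewrite -mulr_suml hs exprVn divff ?sqrtr1 // expf_neq0 // gt_eqF.
Qed.

Lemma main_eq c d : is_config q c -> is_config q d ->
  U_A N (normalize_delta delta) d c = U_A N delta d c.
Proof.
move=> hc hd.
have Dz0' x : normalize_delta delta z0 x = if x == q then 1 else 0.
  by rewrite /normalize_delta vnorm_z0 (_ : (1 : R)%:C%C = 1) // divr1 delta_z0.
rewrite (@U_prodE _ Dz0' (Bcd c d)); last by move=> i; apply: notinB.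
rewrite [RHS](@U_prodE _ delta_z0 (Bcd c d)); last by move=> i; apply: notinB.
rewrite /normalize_delta big_split /= prodfV -rmorph_prod.
have := Pc1 hc; rewrite (fsbigTE (Bcd c d)); last first.
  by move=> i /(notinB hc hd) [-> _]; exact: vnorm_z0.
by move=> ->; rewrite rmorph1 invr1 mulr1.
Qed.

End P.

Unset Implicit Arguments.
Set Strict Implicit.

Theorem mainTheorem6 (R : realType) (Sigma : finType) (q : Sigma) (r : nat)
    (N : r.-tuple int) (delta : r.-tuple Sigma -> Sigma -> R[i]) :
  is_LQCA q N delta -> well_formed q N delta ->
  (forall c d : int -> Sigma, is_config q c -> is_config q d ->
     U_A N (normalize_delta delta) d c = U_A N delta d c) /\
  (forall w : r.-tuple Sigma, vnorm (normalize_delta delta w) = 1).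
Proof.
move=> HL HW; split.
  by move=> c d hc hd; exact: (main_eq HL HW hc hd).
by move=> w; exact: (vnorm_norm HL w).
Qed.
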